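(* Let $n\ge 1$, $m\ge 2$, $0\le k\le n-1$. The maximum possible size of a $k$-bounded acyclic CP-net over $n$ variables of domain size $m$ is $\mathcal{M}_k=(n-k)m^k+\frac{m^k-1}{m-1}$.
   Context: Variables $V=\{v_1,\dots,v_n\}$, each with a finite domain of size $m$. A CP-net specifies for each $v_i$ a parent set $Pa(v_i)\subseteq V\setminus\{v_i\}$ and a conditional preference table $\mathrm{CPT}(v_i)$ which, for each assignment $\gamma$ of values to the variables in $Pa(v_i)$, either contains one statement (a strict total order on the domain of $v_i$) or contains nothing; parents are non-dummy (each actually affects the preferences). The CP-net is acyclic if the graph with edges $(v_j,v_i)$ for $v_j\in Pa(v_i)$ is acyclic, and $k$-bounded if all $|Pa(v_i)|\le k$. The size of $\mathrm{CPT}(v_i)$ is its number of statements (at most $m^{|Pa(v_i)|}$), and the size of the CP-net is the sum of the sizes of its CPTs. *)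

(* Defs.v *)
From mathcomp Require Import all_boot all_fingroup.
Set Implicit Arguments. Unset Strict Implicit. Unset Printing Implicit Defensive.

(* Variables v_1..v_n are 'I_n, every domain is 'I_m.
   A strict total order on 'I_m is represented by a permutation p : {perm 'I_m}
   (p 0 is the most preferred value, p 1 the next, ...); this is a bijective
   encoding of strict total orders on a finite set. *)
Definition order_on (m : nat) := {perm 'I_m}.

(* An assignment gamma of values to the variables of a set P is encoded as a
   partial outcome g : {ffun 'I_n -> option 'I_m} whose support is exactly P. *)
Definition assigns (n m : nat) (P : {set 'I_n}) (g : {ffun 'I_n -> option 'I_m}) : bool :=
  [forall j, (g j != None) == (j \in P)].

Record CPnet (n m : nat) := mkCPnet {
  Pa  : 'I_n -> {set 'I_n};
  (* CPT(v_i): for each parent assignment, either one statement or nothing.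
     (values on non-assignments of Pa i are irrelevant) *)
  cpt : 'I_n -> {ffun 'I_n -> option 'I_m} -> option (order_on m)
}.

Definition CPnet_wf n m (N : CPnet n m) : Prop :=
  forall i : 'I_n, i \notin Pa N i /\
    forall j, j \in Pa N i ->
      exists g g' : {ffun 'I_n -> option 'I_m},
        [/\ assigns (Pa N i) g, assigns (Pa N i) g',
            (forall l, l != j -> g l = g' l) & cpt N i g != cpt N i g'].

Definition dep_edge n m (N : CPnet n m) : rel 'I_n := fun j i => j \in Pa N i.

Definition acyclic n m (N : CPnet n m) : Prop :=
  forall i j : 'I_n, dep_edge N j i -> ~~ connect (dep_edge N) i j.

Definition k_bounded n m (k : nat) (N : CPnet n m) : Prop :=
  forall i, #|Pa N i| <= k.

Definition cpt_size n m (N : CPnet n m) (i : 'I_n) : nat :=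
  #|[set g : {ffun 'I_n -> option 'I_m} | assigns (Pa N i) g & cpt N i g != None]|.

Definition cpnet_size n m (N : CPnet n m) : nat := \sum_(i < n) cpt_size N i.

Definition valid_kacyclic n m k (N : CPnet n m) : Prop :=
  [/\ CPnet_wf N, acyclic N & k_bounded k N].

(* Main.v *)
Require Import Defs.
From mathcomp Require Import all_boot all_fingroup.
Set Implicit Arguments. Unset Strict Implicit. Unset Printing Implicit Defensive.

Lemma card_assigns n m (P : {set 'I_n}) :
  #|[set g : {ffun 'I_n -> option 'I_m} | assigns P g]| = m ^ #|P|.
Proof.
have E : [set g : {ffun 'I_n -> option 'I_m} | assigns P g] =i pffun_on None P (predC1 None).
move=> g; rewrite inE /assigns.
apply/forallP/pffun_onP => [H|[H1 H2] j].
  split.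
    apply/subsetP => j; rewrite !inE => /eqP Hj.
    by have /eqP <- := H j; apply/eqP.
  move=> o /imageP [j jP ->]; rewrite !inE.
  by have /eqP -> := H j.
apply/eqP; case jP: (j \in P).
  by have := H2 (g j); rewrite !inE; apply; apply/imageP; exists j.
apply/negbTE; apply/negP => Hj.
move/subsetP: H1 => /(_ j). rewrite !inE jP; by move/(_ Hj).
by rewrite (eq_card E) card_pffun_on cardC1 card_option card_ord.
Qed.
Definition F m k s := \sum_(j < s) m ^ minn j k.

Section G.
Variables (T : finType) (Pa : T -> {set T}).
Let e : rel T := fun j i => j \in Pa i.
Hypothesis acyc : forall i j, j \in Pa i -> ~~ connect e i j.

Lemma sink_exists (S : {set T}) v0 : v0 \in S ->
  exists2 v, v \in S & forall w, w \in S -> v \notin Pa w.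
Proof.
move=> v0S.
case: (arg_minnP (fun x => #|[set u | connect e x u]|) v0S) => v vS vmin.
exists v => // w wS; apply/negP => vw.
have := vmin w wS; apply/negP; rewrite -ltnNge; apply: proper_card.
apply/properP; split.
  apply/subsetP => u; rewrite !inE => wu.
  by apply: connect_trans wu; apply: connect1.
by exists v; rewrite !inE ?connect0 // (negbTE (acyc vw)).
Qed.

Lemma sum_bound m k (m0 : 0 < m) (kb : forall i, #|Pa i| <= k)
  (irr : forall i, i \notin Pa i) :
  forall s (S : {set T}), #|S| = s ->
  \sum_(i in S) m ^ #|Pa i :&: S| <= F m k s.
Proof.
elim=> [|s IH] S cS.
  by move/eqP: cS; rewrite cards_eq0 => /eqP ->; rewrite big_set0.
have [v0 v0S] : exists v0, v0 \in S.
  by apply/set0Pn; rewrite -card_gt0 cS.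
have [v vS vsink] := sink_exists v0S.
have cSv : #|S :\ v| = s by move: cS; rewrite (cardsD1 v S) vS => -[].
rewrite (bigD1 v) //= /F big_ord_recr /= addnC.
apply: leq_add.
  have E : \sum_(i in S | i != v) m ^ #|Pa i :&: S| =
           \sum_(i in S :\ v) m ^ #|Pa i :&: (S :\ v)|.
    apply: eq_big => [i|i]; first by rewrite !inE andbC.
    move=> /andP [iS iv]; suff -> : Pa i :&: (S :\ v) = Pa i :&: S by [].
    apply/setP => u; rewrite !inE.
    case: (u =P v) => [->|]; last by [].
    by rewrite (negbTE (vsink i iS)).
  by rewrite E; apply: IH.
apply: leq_pexp2l => //; rewrite leq_min; apply/andP; split.
  have : Pa v :&: S \subset S :\ v.
    apply/subsetP => u; rewrite !inE => /andP [uv ->]; rewrite andbT.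
    by apply/negP => /eqP Hu; move: uv; rewrite Hu (negbTE (irr v)).
  by move/subset_leq_card; rewrite cSv.
by apply: leq_trans (kb v); apply: subset_leq_card; apply: subsetIl.
Qed.
End G.


Lemma F_formula m k n : 2 <= m -> k <= n ->
  F m k n = (n - k) * m ^ k + (m ^ k - 1) %/ (m - 1).
Proof.
move=> m2 /subnKC <-; rewrite addKn.
have -> : (m ^ k - 1) %/ (m - 1) = F m k k.
  rewrite subn1 predn_exp -subn1 mulKn; last by rewrite subn_gt0.
  by apply: eq_bigr => j _; rewrite (minn_idPl (ltnW (ltn_ord j))).
elim: (n - k) => [|d IH]; first by rewrite addn0.
rewrite addnS /F big_ord_recr /= -/(F m k (k + d)) IH (minn_idPr (leq_addr _ _)).
by rewrite mulSn /F addnAC [m ^ k + _]addnC.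
Qed.

Lemma card_lt_ord n c : c <= n -> #|[set j : 'I_n | j < c]| = c.
Proof.
move=> cn.
have -> : [set j : 'I_n | j < c] = widen_ord cn @: [set: 'I_c].
  apply/setP => j; rewrite inE; apply/idP/imsetP => [jc|[x _ ->]]; last by rewrite /= ltn_ord.
  by exists (Ordinal jc) => //; apply: val_inj.
rewrite card_imset ?cardsT ?card_ord //.
by move=> a b /(congr1 val) /= /val_inj.
Qed.

Theorem lemma1 (n m k : nat) (Hn : 1 <= n) (Hm : 2 <= m) (Hk : k <= n - 1) :
  (forall N : CPnet n m, valid_kacyclic k N ->
     cpnet_size N <= (n - k) * m ^ k + (m ^ k - 1) %/ (m - 1)) /\
  (exists N : CPnet n m, valid_kacyclic k N /\
     cpnet_size N = (n - k) * m ^ k + (m ^ k - 1) %/ (m - 1)).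
Proof.
have kn : k <= n by apply: leq_trans Hk (leq_subr _ _).
rewrite -F_formula //; split.
  move=> N [wf ac kb].
  apply: (@leq_trans (\sum_(i < n) m ^ #|Pa N i|)).
    apply: leq_sum => i _; rewrite /cpt_size -card_assigns.
    by apply: subset_leq_card; apply/subsetP => g; rewrite !inE => /andP [].
  have := @sum_bound _ (Pa N) (fun i j h => ac i j h) m k (ltnW Hm) kb
    (fun i => (wf i).1) n [set: 'I_n].
  rewrite cardsT card_ord => /(_ erefl).
  congr (_ <= _); apply: eq_big => [i|i _]; first by rewrite inE.
  by rewrite setIT.
have m0 : 0 < m by apply: ltnW.
pose z0 : 'I_m := Ordinal m0.
pose z1 : 'I_m := Ordinal Hm.
have z01 : z0 != z1 by [].
pose Pa0 := fun i : 'I_n => [set j : 'I_n | j < minn i k].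
pose cpt0 := fun (i : 'I_n) (g : {ffun 'I_n -> option 'I_m}) =>
  Some (if [forall l, (l \in Pa0 i) ==> (g l == Some z0)] then (1%g : {perm 'I_m})
        else tperm z0 z1).
have cPa : forall i, #|Pa0 i| = minn i k.
  move=> i; apply: card_lt_ord; apply: leq_trans (geq_minl _ _) _.
  exact: ltnW.
exists (mkCPnet Pa0 cpt0); split; first split.
- move=> i; split; first by rewrite inE -leqNgt geq_minl.
  move=> j jP /=.
  exists [ffun l => if l \in Pa0 i then Some z0 else None].
  exists [ffun l => if l \in Pa0 i then Some (if l == j then z1 else z0) else None].
  split.
  + by apply/forallP => l; rewrite ffunE; case: (l \in Pa0 i).
  + by apply/forallP => l; rewrite ffunE; case: (l \in Pa0 i).
  + by move=> l lj; rewrite !ffunE (negbTE lj).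
  rewrite /cpt0.
  have -> : [forall l, (l \in Pa0 i) ==>
      ([ffun l0 => if l0 \in Pa0 i then Some z0 else None] l == Some z0)].
    by apply/forallP => l; rewrite ffunE; case: (l \in Pa0 i).
  have -> : [forall l, (l \in Pa0 i) ==>
      ([ffun l0 => if l0 \in Pa0 i then Some (if l0 == j then z1 else z0)
                   else None] l == Some z0)] = false.
    apply/negbTE/forallP => /(_ j); rewrite ffunE jP eqxx /=.
    by [].
  apply/eqP => -[] /(congr1 (fun p : {perm 'I_m} => p z0)).
  by rewrite perm1 tpermL => /eqP; rewrite (negbTE z01).
- move=> i j /=; rewrite /dep_edge /= inE => ji.
  have ji' : j < i by apply: leq_trans ji (geq_minl _ _).
  apply/negP => /connectP [p pth jl].
  suff : i <= last i p by rewrite -jl leqNgt ji'.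
  elim: p i pth {ji ji' jl} => [|x p IHp] i //= /andP [ix xp].
  rewrite /dep_edge /= inE in ix.
  apply: leq_trans (IHp x xp).
  exact: ltnW (leq_trans ix (geq_minl _ _)).
- by move=> i /=; rewrite cPa geq_minr.
rewrite /cpnet_size /F; apply: eq_bigr => i _.
rewrite /cpt_size /= -(cPa i) -card_assigns.
by apply: eq_card => g; rewrite !inE andbT.
Qed.
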